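(* Let $R$ be a profile of strict linear orders over bundles. An assignment $P$ admits no generalized cycle (w.r.t. $R$) if and only if $P$ is the output, on $R$, of some eating algorithm, i.e., there exist eating speed functions $\omega=(\omega_j)_{j\le n}$ such that the eating algorithm with speeds $\omega$ outputs $P$.
   Context: Setting: $N=\{1,\dots,n\}$ agents; $M=D_1\cup\dots\cup D_p$ items with pairwise disjoint types, $|D_i|=n$, unit supply; bundles $\mathcal D=D_1\times\dots\times D_p$; strict linear orders $\succ_j$ on $\mathcal D$. An assignment is an $n\times|\mathcal D|$ matrix $(p_{j,x})$ with entries in $[0,1]$, rows summing to $1$, and $\sum_j\sum_{x\ni o}p_{j,x}=1$ for every item $o$. $(x,\hat x)$ is an improvable tuple for $P$ if some agent $j$ has $x\succ_j\hat x$ and $p_{j,\hat x}>0$. A nonempty set $C$ of improvable tuples is a generalized cycle if for every item $o$: if some $(x_1,\hat x_1)\in C$ has $o\in x_1$, then some $(x_2,\hat x_2)\in C$ has $o\in\hat x_2$. Eating algorithms: an eating speed function for agent $j$ is a nonnegative integrable function $\omega_j:[0,1]\to\mathbb R_{\ge0}$ with $\int_0^1\omega_j(t)\,dt=1$. Given $\omega=(\omega_j)_j$, items start with supply $1$; a bundle is available if all its items have positive remaining supply. For $t\in[0,1]$, each agent $j$ eats her $\succ_j$-most-preferred available bundle at instantaneous rate $\omega_j(t)$: $p_{j,x}$ for that bundle $x$ grows at rate $\omega_j(t)$ and each item of $x$ is consumed at that rate. When an item's supply reaches $0$ it is exhausted, all bundles containing it become unavailable, and agents switch to their next most preferred available bundle.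 The process stops at time $1$ or when all items are exhausted; the accumulated matrix $(p_{j,x})$ is the output. *)

(* Defs.v *)
From HB Require Import structures.
From mathcomp Require Import all_boot all_order all_algebra.
From mathcomp Require Import all_classical all_reals all_analysis.
Set Implicit Arguments. Unset Strict Implicit. Unset Printing Implicit Defensive.
Import Order.TTheory GRing.Theory Num.Theory.
Local Open Scope ring_scope.
Local Open Scope classical_set_scope.

(* Agents: 'I_n.  Item types: 'I_p.  The item set D_i is identified with
   'I_n, so an item is a pair (i, k) : 'I_p * 'I_n ("k-th item of type i").
   A bundle picks one item of each type: a finite function 'I_p -> 'I_n. *)
Definition item (n p : nat) := ('I_p * 'I_n)%type.
Definition bundle (n p : nat) := {ffun 'I_p -> 'I_n}.

Definition in_bundle n p (o : item n p) (x : bundle n p) : bool := x o.1 == o.2.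

(* pref x y  means  x >_j y  (strict preference). *)
Definition strict_linear_order (T : finType) (r : rel T) : Prop :=
  [/\ irreflexive r, transitive r & forall x y, x != y -> r x y || r y x].

Definition is_assignment (R : realType) n p (P : 'I_n -> bundle n p -> R) : Prop :=
  [/\ (forall j x, 0 <= P j x <= 1),
      (forall j, \sum_(x : bundle n p) P j x = 1) &
      (forall o : item n p, \sum_(j < n) \sum_(x : bundle n p | in_bundle o x) P j x = 1)].

Definition improvable (R : realType) n p (pref : 'I_n -> rel (bundle n p))
  (P : 'I_n -> bundle n p -> R) (t : bundle n p * bundle n p) : Prop :=
  exists j, pref j t.1 t.2 /\ 0 < P j t.2.

Definition generalized_cycle (R : realType) n p (pref : 'I_n -> rel (bundle n p))
  (P : 'I_n -> bundle n p -> R) (C : {set bundle n p * bundle n p}) : Prop :=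
  [/\ C != finset.set0,
      (forall t, t \in C -> improvable pref P t) &
      (forall o : item n p,
         (exists2 t, t \in C & in_bundle o t.1) ->
         (exists2 t, t \in C & in_bundle o t.2))].

Definition no_generalized_cycle (R : realType) n p (pref : 'I_n -> rel (bundle n p))
  (P : 'I_n -> bundle n p -> R) : Prop :=
  forall C : {set bundle n p * bundle n p}, ~ generalized_cycle pref P C.

Definition eating_speed (R : realType) (w : R -> R) : Prop :=
  [/\ (forall t, 0 <= t <= 1 -> 0 <= w t),
      (@lebesgue_measure R).-integrable `[0%R, 1%R] (EFin \o w) &
      Rintegral (@lebesgue_measure R) `[0%R, 1%R] w = 1].

(* A trajectory q j x t = amount of bundle x eaten by agent j up to time t. *)
Definition supply (R : realType) n p (q : 'I_n -> bundle n p -> R -> R)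
  (o : item n p) (t : R) : R :=
  1 - \sum_(j < n) \sum_(x : bundle n p | in_bundle o x) q j x t.

Definition available (R : realType) n p (q : 'I_n -> bundle n p -> R -> R)
  (x : bundle n p) (t : R) : bool :=
  [forall o : item n p, in_bundle o x ==> (0 < supply q o t)].

Definition eats (R : realType) n p (pref : 'I_n -> rel (bundle n p))
  (q : 'I_n -> bundle n p -> R -> R) (j : 'I_n) (x : bundle n p) (t : R) : bool :=
  available q x t &&
  [forall y : bundle n p, available q y t ==> (y == x) || pref j x y].

Definition eating_run (R : realType) n p (pref : 'I_n -> rel (bundle n p))
  (w : 'I_n -> R -> R) (q : 'I_n -> bundle n p -> R -> R) : Prop :=
  forall j x t, 0 <= t <= 1 ->
    let f := fun s => w j s * (eats pref q j x s)%:R in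
    (@lebesgue_measure R).-integrable `[0%R, t] (EFin \o f) /\
    q j x t = Rintegral (@lebesgue_measure R) `[0%R, t] f.

Definition eating_output (R : realType) n p (pref : 'I_n -> rel (bundle n p))
  (w : 'I_n -> R -> R) (P : 'I_n -> bundle n p -> R) : Prop :=
  exists q, eating_run pref w q /\ forall j x, P j x = q j x 1.

(* Main.v *)
Require Import Defs.
From HB Require Import structures.
From mathcomp Require Import all_boot all_order all_algebra.
From mathcomp Require Import all_classical all_reals all_analysis.
From mathcomp Require Import lra zify.
Set Implicit Arguments. Unset Strict Implicit. Unset Printing Implicit Defensive.
Import Order.TTheory GRing.Theory Num.Theory.
Lemma order_exists (T It : finType) (inb : It -> T -> bool) :
  forall (C : {set T * T}),
  (forall C' : {set T * T}, C' \subset C -> C' != finset.set0 ->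
     exists z, (exists2 t, t \in C' & inb z t.1) /\ forall t, t \in C' -> ~~ inb z t.2) ->
  exists e : It -> nat, forall t, t \in C ->
     exists z1, inb z1 t.1 /\ forall z2, inb z2 t.2 -> e z1 < e z2.
Proof.
move=> C0; move: {2}#|C0| (leqnn #|C0|) => k; elim: k C0 => [|k IH] C Hk HC.
  exists (fun _ => 0%N) => t tC.
  by move: Hk; rewrite leqn0 cards_eq0 => /eqP CE; rewrite CE inE in tC.
have [->|Cn0] := eqVneq C finset.set0.
  by exists (fun _ => 0%N) => t; rewrite inE.
have [z [[t0 t0C zt0] Ho]] := HC C (subxx C) Cn0.
set C' := [set t in C | ~~ inb z t.1].
have sC' : C' \subset C by apply/fintype.subsetP => t; rewrite inE => /andP[].
have Hk' : #|C'| <= k.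
  have : C' \proper C.
    rewrite finset.properEneq sC' andbT; apply/eqP => E.
    by move: t0C; rewrite -E inE zt0 andbF.
  by move/fintype.proper_card => H; rewrite -ltnS (leq_trans H).
have [e' He'] := IH C' Hk' (fun C2 s2 n2 => HC C2 (fintype.subset_trans s2 sC') n2).
exists (fun z' => if z' == z then 0%N else (e' z').+1) => t tC.
have [zt|not] := boolP (inb z t.1).
  exists z; split => // z2 z2t; rewrite eqxx.
  case: eqP => // E; by move: (Ho t tC); rewrite -E z2t.
have tC' : t \in C' by rewrite inE tC not.
have [z1 [z1t H1]] := He' t tC'.
exists z1; split => // z2 z2t.
have -> : (z1 == z) = false by apply/negbTE; apply: contraNneq not => <-.
have -> : (z2 == z) = false by apply/negbTE; apply: contraNneq (Ho t tC) => <-.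
by rewrite ltnS H1.
Qed.


Local Open Scope ring_scope.
Local Open Scope classical_set_scope.

Section Back.
Variables (R : realType) (n p : nat) (pref : 'I_n -> rel (bundle n p)).
Hypothesis Hpref : forall j, strict_linear_order (pref j).
Variables (w : 'I_n -> R -> R) (q : 'I_n -> bundle n p -> R -> R).
Hypothesis Hw : forall j, eating_speed (w j).
Hypothesis Hq : eating_run pref w q.

Lemma q_mono j x a b : 0 <= a -> a <= b -> b <= 1 -> q j x a <= q j x b.
Proof.
move=> a0 ab b1.
have Ha : 0 <= a <= 1 by rewrite a0 (le_trans ab b1).
have Hb : 0 <= b <= 1 by rewrite (le_trans a0 ab) b1.
have [i1 ->] := Hq j x Ha; have [i2 ->] := Hq j x Hb.
rewrite /Rintegral; apply: fine_le.
- exact: integrable_fin_num.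
- exact: integrable_fin_num.
apply: ge0_subset_integral => //.
- exact: (measurable_int _ i2).
- move=> s /=; rewrite in_itv /= => /andP[s0 sb].
  rewrite lee_fin mulr_ge0 ?ler0n //.
  by case: (Hw j) => H _ _; apply: H; rewrite s0 (le_trans sb b1).
- move=> s /=; rewrite !in_itv /= => /andP[-> sa] /=; exact: le_trans sa ab.
Qed.

Lemma supply_anti o a b : 0 <= a -> a <= b -> b <= 1 -> supply q o b <= supply q o a.
Proof.
move=> a0 ab b1; rewrite /supply; apply: lerB => //; apply: ler_sum => j _; apply: ler_sum => x _.
exact: q_mono.
Qed.


Lemma back (P : 'I_n -> bundle n p -> R) : (forall j x, P j x = q j x 1) ->
  no_generalized_cycle pref P.
Proof.
move=> HP C [Cn0 Cimp Cclos].
have key : forall t, t \in C -> exists s, (0 <= s <= 1) /\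
    available q t.2 s /\ ~~ available q t.1 s.
  move=> t /Cimp [j [pj Pj]].
  have [[s [Hs He]]|none] := pselect (exists s, 0 <= s <= 1 /\ eats pref q j t.2 s).
  - exists s; split => //; move/andP: He => [av Hall]; split => //.
    apply/negP => av1; have := forallP Hall t.1; rewrite av1 /= => /orP[/eqP E|pr].
    + by case: (Hpref j) => irr _ _; move: pj; rewrite E irr.
    + by case: (Hpref j) => irr tr _; move: (tr _ _ _ pj pr); rewrite irr.
  - exfalso; have : P j t.2 = 0.
      have H01 : (0:R) <= (1:R) <= 1 by rewrite ler01 lexx.
      rewrite HP; have [_ ->] := Hq j t.2 H01.
      rewrite (@eq_Rintegral _ _ _ _ _ (fun _ => 0)); first by rewrite Rintegral_cst //= mul0r.
      move=> s /set_mem /=; rewrite in_itv /= => Hs.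
      have -> : eats pref q j t.2 s = false by apply/negP => E; apply: none; exists s.
      by rewrite mulr0.
    by move=> E; move: Pj; rewrite E ltxx.
have [sf Hsf] : exists sf : bundle n p * bundle n p -> R, forall t, t \in C ->
    (0 <= sf t <= 1) /\ available q t.2 (sf t) /\ ~~ available q t.1 (sf t).
  suff [f Hf] : {f : bundle n p * bundle n p -> R & forall t, t \in C -> (0 <= f t <= 1) /\ available q t.2 (f t) /\ ~~ available q t.1 (f t)} by exists f.
  apply: (@choice _ _ (fun t s => t \in C -> (0 <= s <= 1) /\ available q t.2 s /\ ~~ available q t.1 s)) => t; case: (boolP (t \in C)) => tC.
    by have [s Hs] := key t tC; exists s.
  by exists 0.
have /set0Pn [t0 t0C] := Cn0.
case: (arg_minP sf t0C) => tm tmC tmin.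
have [/andP[s0 s1] [_ na]] := Hsf tm tmC.
move: na => /forallPn [it]; rewrite negb_imply => /andP[ot1 ns].
have [t' t'C ot'2] := Cclos it (ex_intro2 _ _ tm tmC ot1).
have [/andP[s0' s1'] [av' _]] := Hsf t' t'C.
have := forallP av' it; rewrite ot'2 /= => pos.
have := supply_anti it s0 (tmin t' t'C) s1'.
by move=> H; move: ns; rewrite (lt_le_trans pos H).
Qed.

End Back.

Section Meas.
Variable R : realType.
Notation mu := (@lebesgue_measure R).

Lemma meas_co (a b : R) : a <= b ->
  fine (mu [set` Interval (BLeft a) (BLeft b)]) = b - a.
Proof.
move=> ab; rewrite lebesgue_measure_itv /= lte_fin.
have [ab'|] := ltP a b; first by rewrite -EFinD.
move=> ba; have -> : b = a by apply/le_anti; rewrite ba ab.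
by rewrite subrr.
Qed.

Lemma meas_cc (a t : R) :
  fine (mu [set` Interval (BLeft a) (BRight t)]) = if a < t then t - a else 0.
Proof.
rewrite lebesgue_measure_itv /= lte_fin.
by case: ltP => // _; rewrite -EFinD.
Qed.

Lemma inter_ge (a b t : R) : 0 <= a -> b <= t ->
  [set` Interval (BLeft a) (BLeft b)] `&` `[0, t] = [set` Interval (BLeft a) (BLeft b)].
Proof.
move=> a0 bt; apply/seteqP; split => s /=; rewrite !in_itv /=.
  by case=> ->.
move=> /andP[H1 H2]; split; rewrite ?in_itv /= ?H1 ?H2 //.
apply/andP; split; [exact: le_trans a0 H1 | exact: ltW (lt_le_trans H2 bt)].
Qed.

Lemma inter_lt (a b t : R) : 0 <= a -> t < b ->
  [set` Interval (BLeft a) (BLeft b)] `&` `[0, t] = `[a, t].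
Proof.
move=> a0 tb; apply/seteqP; split => s /=; rewrite !in_itv /=.
  by move=> -[/andP[-> _] /andP[_ ->]].
by move=> /andP[H1 H2]; rewrite H1 (le_lt_trans H2 tb) (le_trans a0 H1) H2.
Qed.
End Meas.

Section Fwd.
Variables (R : realType) (n p : nat) (pref : 'I_n -> rel (bundle n p)).
Hypothesis Hpref : forall j, strict_linear_order (pref j).
Variable (P : 'I_n -> bundle n p -> R).
Hypothesis HP : is_assignment P.
Variable e : item n p -> nat.
Hypothesis He : forall y x, improvable pref P (y, x) ->
  exists o1, in_bundle o1 y /\ forall o2, in_bundle o2 x -> (e o1 < e o2)%N.

Definition K := (\max_(o : item n p) e o)%N.
Lemma eK o : (e o <= K)%N.
Proof. exact: leq_bigmax. Qed.

Definition Mx (x : bundle n p) := (\max_(o | in_bundle o x) (K.+1 - e o))%N.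
Definition M (x : bundle n p) := (K.+1 - Mx x)%N.

Lemma M1 o x : in_bundle o x -> (M x <= e o)%N.
Proof.
move=> ox; have H : (K.+1 - e o <= Mx x)%N by exact: leq_bigmax_cond.
have := eK o; rewrite /M; lia.
Qed.

Lemma M2 x : M x = K.+1 \/ exists o, in_bundle o x /\ M x = e o.
Proof.
rewrite /M /Mx; apply: (big_ind (fun v => K.+1 - v = K.+1 \/ exists o, in_bundle o x /\ K.+1 - v = e o)%N).
- by left; rewrite subn0.
- by move=> u v Hu Hv; rewrite /maxn; case: ltnP => _; [exact: Hv | exact: Hu].
- move=> o ox; right; exists o; split => //; have := eK o; lia.
Qed.

Lemma M3 x : (M x <= K.+1)%N.
Proof.
case: (M2 x) => [-> //|[it [_ ->]]]; apply: leqW; exact: leq_bigmax.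
Qed.

Lemma Mlt y x : improvable pref P (y, x) -> (M y < M x)%N.
Proof.
move=> /He [it1 [h1y H]]; apply: leq_ltn_trans (M1 h1y) _.
case: (M2 x) => [->|[it2 [h2x ->]]]; last exact: H.
by rewrite ltnS; exact: leq_bigmax.
Qed.


Lemma P_ge0 j x : 0 <= P j x.
Proof. by case: HP => H _ _; case/andP: (H j x). Qed.

Lemma P0_or j x : P j x = 0 \/ 0 < P j x.
Proof. by have := P_ge0 j x; rewrite le_eqVlt => /predU1P[<-|]; [left|right]. Qed.

Definition Dn : R := (K.+3)%:R.
Definition beta x : R := (M x).+1%:R / Dn.
Definition amax j x := (\max_(y | pref j y x) (M y).+1)%N.
Definition alpha j x : R := (amax j x)%:R / Dn.
Definition Iv j x : set R := [set` Interval (BLeft (alpha j x)) (BLeft (beta x))].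
Definition cc j x : R := P j x / (beta x - alpha j x).
Definition qq j x (t : R) : R := cc j x * fine (lebesgue_measure (Iv j x `&` `[0%R, t])).
Definition ww j (s : R) : R := \sum_(x : bundle n p) cc j x * \1_(Iv j x) s.

Lemma Dn_gt0 : 0 < Dn.
Proof. by rewrite /Dn ltr0n. Qed.

Lemma lt_div (a b : nat) : (a%:R / Dn < b%:R / Dn) = (a < b)%N.
Proof. by rewrite ltr_pM2r ?invr_gt0 ?Dn_gt0 // ltr_nat. Qed.

Lemma le_div (a b : nat) : (a%:R / Dn <= b%:R / Dn) = (a <= b)%N.
Proof. by rewrite ler_pM2r ?invr_gt0 ?Dn_gt0 // ler_nat. Qed.

Lemma alpha_ge0 j x : 0 <= alpha j x.
Proof. by rewrite /alpha divr_ge0 // ltW // Dn_gt0. Qed.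

Lemma beta_le1 x : beta x <= 1.
Proof.
rewrite /beta ler_pdivrMr ?Dn_gt0 // mul1r /Dn ler_nat.
by have := M3 x; lia.
Qed.

Lemma beta_le_alpha j y x : pref j y x -> beta y <= alpha j x.
Proof. by move=> yx; rewrite /beta /alpha le_div; exact: (leq_bigmax_cond (F := fun y => (M y).+1)). Qed.

Lemma alpha_lt_beta j x : 0 < P j x -> alpha j x < beta x.
Proof.
move=> Pp; rewrite /alpha /beta lt_div ltnS; apply/bigmax_leqP => y yx.
by apply: Mlt; exists j; split.
Qed.

Lemma cc_P0 j x : P j x = 0 -> cc j x = 0.
Proof. by move=> E; rewrite /cc E mul0r. Qed.

Lemma cc_ge0 j x : 0 <= cc j x.
Proof.
case: (P0_or j x) => [/cc_P0 -> //|Pp].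
by rewrite /cc divr_ge0 ?P_ge0 // subr_ge0 ltW // alpha_lt_beta.
Qed.

Lemma cc_gt0 j x : 0 < P j x -> 0 < cc j x.
Proof. by move=> Pp; rewrite /cc divr_gt0 // subr_gt0 alpha_lt_beta. Qed.

Lemma ccL j x : 0 < P j x -> cc j x * (beta x - alpha j x) = P j x.
Proof.
move=> Pp; rewrite /cc divfK //; apply: lt0r_neq0; rewrite subr_gt0.
exact: alpha_lt_beta.
Qed.

Lemma qq_ge j x t : beta x <= t -> qq j x t = P j x.
Proof.
move=> bt; rewrite /qq /Iv inter_ge ?alpha_ge0 //.
case: (P0_or j x) => [E|Pp]; first by rewrite cc_P0 // mul0r E.
by rewrite meas_co ?ccL // ltW // alpha_lt_beta.
Qed.

Lemma qq_lt j x t : t < beta x -> 0 < P j x -> qq j x t < P j x.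
Proof.
move=> tb Pp; rewrite /qq /Iv inter_lt ?alpha_ge0 // meas_cc.
rewrite -(ccL Pp) ltr_pM2l ?cc_gt0 //.
have := alpha_lt_beta Pp; case: ifP => _ ab; lra.
Qed.

Lemma qq_le j x t : qq j x t <= P j x.
Proof.
have [bt|tb] := leP (beta x) t; first by rewrite qq_ge.
case: (P0_or j x) => [E|Pp]; last exact/ltW/qq_lt.
by rewrite /qq cc_P0 // mul0r E.
Qed.

Lemma supply_eq it s : supply qq it s =
  \sum_(j < n) \sum_(x : bundle n p | in_bundle it x) (P j x - qq j x s).
Proof.
case: HP => _ _ H3; rewrite /supply -[X in X - _](H3 it) -sumrB.
by apply: eq_bigr => j _; rewrite -sumrB.
Qed.

Lemma supply_pos it s : (exists j x, [/\ in_bundle it x, 0 < P j x & s < beta x]) ->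
  0 < supply qq it s.
Proof.
move=> [j [x [ix Pp sb]]]; rewrite supply_eq (bigD1 j) //= (bigD1 x) //=.
have h1 : 0 < P j x - qq j x s by rewrite subr_gt0 qq_lt.
have h2 : 0 <= \sum_(i < n | i != j) \sum_(x0 | in_bundle it x0) (P i x0 - qq i x0 s).
  by apply: sumr_ge0 => i _; apply: sumr_ge0 => y _; rewrite subr_ge0 qq_le.
have h3 : 0 <= \sum_(i | in_bundle it i && (i != x)) (P j i - qq j i s).
  by apply: sumr_ge0 => y _; rewrite subr_ge0 qq_le.
lra.
Qed.

Lemma supply_zero it s : (forall j x, in_bundle it x -> P j x = 0 \/ beta x <= s) ->
  supply qq it s = 0.
Proof.
move=> H; rewrite supply_eq big1 // => j _; rewrite big1 // => x ix.
case: (H j x ix) => [E|bs]; last by rewrite qq_ge // subrr.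
by rewrite /qq cc_P0 // mul0r E subrr.
Qed.


Lemma inIv j x s : (s \in Iv j x) = (alpha j x <= s) && (s < beta x).
Proof. by rewrite /Iv; apply/idP/idP => [/set_mem /=|H]; rewrite ?in_itv //; apply: mem_set => /=; rewrite in_itv. Qed.

Lemma avail_of j x s : 0 < P j x -> s < beta x -> available qq x s.
Proof.
move=> Pp sb; apply/forallP => it; apply/implyP => ix; apply: supply_pos.
by exists j, x.
Qed.

Lemma unavail j x y s : 0 < P j x -> alpha j x <= s -> pref j y x ->
  ~~ available qq y s.
Proof.
move=> Pp aS yx; have bya := beta_le_alpha yx.
case: (M2 y) => [EK|[it [iy Ey]]].
  exfalso; have := le_lt_trans bya (alpha_lt_beta Pp).
  by rewrite /beta EK lt_div; have := M3 x; lia.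
apply/forallPn; exists it; rewrite negb_imply iy /= supply_zero ?ltxx //.
move=> j' x' ix'; right; apply: le_trans (le_trans bya aS).
by rewrite /beta le_div ltnS Ey; exact: M1.
Qed.

Lemma eats_of j x s : 0 < P j x -> alpha j x <= s -> s < beta x -> eats pref qq j x s.
Proof.
move=> Pp aS sb; rewrite /eats (avail_of Pp sb) /=; apply/forallP => y; apply/implyP => avy.
case: (eqVneq y x) => //= yx; case: (Hpref j) => irr tr tot.
have := tot x y; rewrite eq_sym yx => /(_ isT) /orP[//|pyx].
by move: avy; rewrite (negbTE (unavail Pp aS pyx)).
Qed.

Lemma eats_uniq (q : 'I_n -> bundle n p -> R -> R) j x y s :
  eats pref q j x s -> eats pref q j y s -> x = y.
Proof.
move=> /andP[ax Hx] /andP[ay Hy]; apply/eqP; apply: contraT => xy.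
have := forallP Hx y; rewrite ay eq_sym (negbTE xy) /= => pxy.
have := forallP Hy x; rewrite ax (negbTE xy) /= => pyx.
by case: (Hpref j) => irr tr _; move: (tr _ _ _ pxy pyx); rewrite irr.
Qed.

Lemma disj j x y s : 0 < P j x -> 0 < P j y -> x != y ->
  s \in Iv j x -> s \in Iv j y -> False.
Proof.
move=> Px Py xy; rewrite !inIv => /andP[ax sx] /andP[ay sy].
case: (Hpref j) => irr tr tot; case/orP: (tot x y xy) => pr.
  by have := beta_le_alpha pr; lra.
by have := beta_le_alpha pr; lra.
Qed.

Lemma ww_eval j x s : ww j s * (eats pref qq j x s)%:R = cc j x * \1_(Iv j x) s.
Proof.
have Z : forall z, ~~ ((0 < P j z) && (s \in Iv j z)) -> cc j z * \1_(Iv j z) s = 0.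
  move=> z; rewrite negb_and => /orP[nP|ns]; last by rewrite indicE (negbTE ns) mulr0.
  by case: (P0_or j z) => [/cc_P0 ->|Pz]; [rewrite mul0r | move: nP; rewrite Pz].
case: (boolP [exists y, (0 < P j y) && (s \in Iv j y)]) => [/existsP [y /andP[Py sy]]|none].
  have ww_y : ww j s = cc j y.
    rewrite /ww (bigD1 y) //= big1 ?addr0; first by rewrite indicE sy mulr1.
    move=> z zy; apply: Z; apply/negP => /andP[Pz sz].
    by apply: (disj Py Pz _ sy sz); rewrite eq_sym.
  have ey : eats pref qq j y s by move: sy; rewrite inIv => /andP[h1 h2]; exact: eats_of.
  case: (eqVneq x y) => [->|xy]; first by rewrite ey ww_y indicE sy.
  rewrite (_ : eats pref qq j x s = false); last first.
    by apply/negP => ex; move: xy; rewrite (eats_uniq ex ey) eqxx.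
  rewrite mulr0 Z //; apply/negP => /andP[Px sx]; exact: (disj Px Py xy sx sy).
rewrite /ww big1 ?mul0r.
  by rewrite Z //; apply: contra none => H; apply/existsP; exists x.
by move=> z _; apply: Z; apply: contra none => H; apply/existsP; exists z.
Qed.


Lemma int_ind j x t :
  (@lebesgue_measure R).-integrable `[0%R, t] (EFin \o (fun s => cc j x * \1_(Iv j x) s)) /\
  Rintegral (@lebesgue_measure R) `[0%R, t] (fun s => cc j x * \1_(Iv j x) s) = qq j x t.
Proof.
have mI : measurable (Iv j x) by exact: measurable_itv.
have i1 : (@lebesgue_measure R).-integrable `[0%R, t] (EFin \o \1_(Iv j x)).
  apply: (integrableS _ _ (@subsetT _ _)) => //; exact: integrable_indic_itv.
have i2 : (@lebesgue_measure R).-integrable `[0%R, t] (EFin \o (fun s => cc j x * \1_(Iv j x) s)).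
  apply: (eq_integrable _ _ _ _ (integrableZl _ (cc j x) i1)); try exact: measurable_itv.
  move=> s _ /=.
  by rewrite EFinM.
split => //; rewrite RintegralZl //; congr (_ * _).
by rewrite /Rintegral integral_indic.
Qed.

Lemma fwd_run : eating_run pref ww qq.
Proof.
move=> j x t Ht /=; have [i v] := int_ind j x t; split.
  apply: (eq_integrable _ _ _ _ i); try exact: measurable_itv.
  move=> s _ /=.
  by rewrite ww_eval.
by rewrite -v; apply: eq_Rintegral => s _; rewrite ww_eval.
Qed.

Lemma Rintegral_sumf (F : bundle n p -> R -> R) :
  (forall x, (@lebesgue_measure R).-integrable `[0%R, 1%R] (EFin \o F x)) ->
  Rintegral (@lebesgue_measure R) `[0%R, 1%R] (fun s => \sum_x F x s) =
  \sum_x Rintegral (@lebesgue_measure R) `[0%R, 1%R] (F x).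
Proof.
move=> HF; rewrite /Rintegral.
under eq_integral do rewrite -sumEFin.
have E := @integral_sum _ _ _ (@lebesgue_measure R) `[0%R,1%R] ltac:(exact: measurable_itv) _ (fun x s => (F x s)%:E) HF (index_enum _) xpredT.
rewrite E.
rewrite (eq_bigr (fun x => (Rintegral (@lebesgue_measure R) `[0%R, 1%R] (F x))%:E)).
  by rewrite sumEFin.
move=> x _; rewrite /Rintegral fineK //.
by apply: (integrable_fin_num _ (HF x)); exact: measurable_itv.
Qed.

Lemma fwd_speed j : eating_speed (ww j).
Proof.
have Hi : forall x, (@lebesgue_measure R).-integrable `[0%R, 1%R]
    (EFin \o (fun s => cc j x * \1_(Iv j x) s)) by move=> x; case: (int_ind j x 1).
split.
- move=> t _; apply: sumr_ge0 => x _; apply: mulr_ge0; first exact: cc_ge0.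
  by rewrite indicE ler0n.
- have I0 := integrable_sum _ (index_enum _) (P := xpredT) (fun x _ => Hi x).
  have I1 := I0 ltac:(exact: measurable_itv).
  apply: (eq_integrable _ _ _ _ I1); first exact: measurable_itv.
  by move=> s _ /=; rewrite sumEFin.
- rewrite /ww Rintegral_sumf //.
  under eq_bigr do rewrite (int_ind _ _ 1).2 qq_ge ?beta_le1 //.
  by case: HP => _ H2 _; exact: H2.
Qed.

Lemma fwd_main : exists w : 'I_n -> R -> R,
    (forall j, eating_speed (w j)) /\ eating_output pref w P.
Proof.
exists ww; split; first exact: fwd_speed.
exists qq; split; first exact: fwd_run.
by move=> j x; rewrite qq_ge // beta_le1.
Qed.

End Fwd.

Unset Implicit Arguments.
Set Strict Implicit.

Theorem theorem5 (R : realType) (n p : nat)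
  (pref : 'I_n -> rel (bundle n p))
  (Hpref : forall j, strict_linear_order (pref j))
  (P : 'I_n -> bundle n p -> R)
  (HP : is_assignment P) :
  no_generalized_cycle pref P <->
  exists w : 'I_n -> R -> R,
    (forall j, eating_speed (w j)) /\ eating_output pref w P.
Proof.
split.
- move=> Hnc.
  pose C : {set bundle n p * bundle n p} := finset.finset (fun t => `[< improvable pref P t >]).
  have [e He'] : exists e : item n p -> nat, forall t, t \in C ->
      exists o1, in_bundle o1 t.1 /\ forall o2, in_bundle o2 t.2 -> (e o1 < e o2)%N.
    apply: (@order_exists (bundle n p) (item n p) (@in_bundle n p) C).
    move=> C' sC' nC'.
    case: (pselect (exists it, (exists2 t, t \in C' & in_bundle it t.1) /\
        forall t, t \in C' -> ~~ in_bundle it t.2)) => // H.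
    exfalso; apply: (Hnc C'); split => //.
    + by move=> t /(fintype.subsetP sC'); rewrite inE => /asboolP.
    + move=> it [t tC it1].
      case: (pselect (exists2 t, t \in C' & in_bundle it t.2)) => // nex.
      exfalso; apply: H; exists it; split; first by exists t.
      by move=> t' t'C; apply/negP => h; apply: nex; exists t'.
  apply: (fwd_main Hpref HP (e := e)).
  move=> y x Hi; apply: (He' (y, x)); rewrite inE; exact/asboolP.
- by move=> [w [Hw [q [Hq HPq]]]]; exact: (back Hpref Hw Hq HPq).
Qed.
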